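(* Let $\mathcal{G}=(\mathcal{V},\mathcal{E})$ be a square lattice with open boundary conditions and one smooth defect. Concretely, take a finite rectangular grid graph and remove a square block of plaquettes lying in its interior: delete the vertices and edges strictly inside the block and keep the cycle of edges that bounds it. All edges carry the same positive weight, and $T=\emptyset$. Let $\Gamma\subseteq\mathcal{E}$ be the set of edges crossed by a path on the dual lattice that connects the defect (the face formed by the removed block) to the external boundary (the outer face). Let $E,E'\subseteq\mathcal{E}$ be any two uncorrectable chains. Then there is a sequence of chains $E=E_0,E_1,\ldots,E_k=E'$ such that each $E_{i+1}$ is obtained from $E_i$ by adding or removing a single edge (i.e. $|E_i\oplus E_{i+1}|=1$), and every $E_i$ is uncorrectable.
   Context: A chain is a subset of edges. Its boundary $\partial E$ is the set of vertices incident to an odd number of edges of $E$. The symbol $\oplus$ denotes symmetric difference. Given edge weights $\phi(e)$, the weight of a chain is $\phi(E)=\sum_{e\in E}\phi(e)$. $\mathcal{C}_{min}(S,T)$ is the set of minimum-weight chains $R$ with $(\partial R)\setminus T=S$; here $T=\emptyset$. The parity of a chain is $\epsilon(E)=|E\cap\Gamma|\bmod 2$. An error chain $E$ with syndrome $S=(\partial E)\setminus T$ is correctable iff $\epsilon(R)=\epsilon(E)$ for all $R\in\mathcal{C}_{min}(S,T)$, and uncorrectable otherwise. *)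

(* Defs.v *)
From HB Require Import structures.
From mathcomp Require Import all_boot all_order all_algebra.
Set Implicit Arguments. Unset Strict Implicit. Unset Printing Implicit Defensive.
Import Order.TTheory GRing.Theory Num.Theory.

Section Chains.
Local Open Scope ring_scope.
Variables (V Ed : finType) (inc : V -> Ed -> bool).
Variables (R : numDomainType) (phi : Ed -> R).

Definition bdry (E : {set Ed}) : {set V} :=
  [set v | odd #|[set e in E | inc v e]|].

Definition symdiff (A B : {set Ed}) : {set Ed} := (A :\: B) :|: (B :\: A).

Definition weight (E : {set Ed}) : R := \sum_(e in E) phi e.

Definition is_Cmin (S T : {set V}) (Rc : {set Ed}) : Prop :=
  bdry Rc :\: T = S /\
  (forall R' : {set Ed}, bdry R' :\: T = S -> weight Rc <= weight R').

Definition parity (Gam E : {set Ed}) : bool := odd #|E :&: Gam|.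

Definition correctable (T : {set V}) (Gam E : {set Ed}) : Prop :=
  forall Rc : {set Ed}, is_Cmin (bdry E :\: T) T Rc -> parity Gam Rc = parity Gam E.

Definition uncorrectable (T : {set V}) (Gam E : {set Ed}) : Prop :=
  ~ correctable T Gam E.
End Chains.

(* Square lattice of W x H plaquettes (vertices (x,y), 0<=x<=W,        *)
(* 0<=y<=H) with the s x s block of plaquettes with lower-left corner  *)
(* (a,b) removed: vertices strictly inside the block are deleted, and  *)
(* hence all edges strictly inside it; the boundary cycle is kept.    *)
Section Lattice.
Variables W H a b s : nat.

Definition Vtx : finType := ('I_W.+1 * 'I_H.+1)%type.

Definition in_block_v (x y : nat) : bool :=
  (a < x < a + s) && (b < y < b + s).

(* raw edges: ((x,y), false) = horizontal edge (x,y)-(x+1,y),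
              ((x,y), true)  = vertical edge   (x,y)-(x,y+1) *)
Definition edge_ok (e : Vtx * bool) : bool :=
  let x := nat_of_ord e.1.1 in let y := nat_of_ord e.1.2 in
  if e.2 then (y < H) && ~~ in_block_v x y && ~~ in_block_v x y.+1
  else (x < W) && ~~ in_block_v x y && ~~ in_block_v x.+1 y.

Definition Edge : finType := {e : Vtx * bool | edge_ok e}.

Definition inc (v : Vtx) (e : Edge) : bool :=
  let p := (val e).1 in let d := (val e).2 in
  (v == p) ||
  ((nat_of_ord v.1 == (nat_of_ord p.1 + ~~ d)%N) &&
   (nat_of_ord v.2 == (nat_of_ord p.2 + d)%N)).

(* Faces: inl (x,y) = unit plaquette with lower-left corner (x,y);
          inr true  = the defect face (removed block);
          inr false = the outer face. *)
Definition Face : eqType := ((nat * nat) + bool)%type.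
Definition Defect : Face := inr true.
Definition Outer : Face := inr false.

Definition pf (x y : nat) : Face :=
  if (x < W) && (y < H) then
    (if (a <= x < a + s) && (b <= y < b + s) then Defect else inl (x, y))
  else Outer.

Definition sides (e : Edge) : Face * Face :=
  let x := nat_of_ord (val e).1.1 in let y := nat_of_ord (val e).1.2 in
  if (val e).2 then ((if x == 0%N then Outer else pf x.-1 y), pf x y)
  else ((if y == 0%N then Outer else pf x y.-1), pf x y).

Definition crosses (e : Edge) (fg : Face * Face) : bool :=
  (sides e == fg) || (sides e == (fg.2, fg.1)).

Definition dual_cut (Gam : {set Edge}) : Prop :=
  exists (fs : seq Face) (es : seq Edge),
    [/\ size fs = (size es).+1,
        head Outer fs = Defect /\ last Defect fs = Outer,
        uniq fs,
        all2 crosses es (zip fs (behead fs))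
      & Gam = [set e in es]].
End Lattice.

(* Main.v *)
Require Import Defs.
From HB Require Import structures.
From mathcomp Require Import all_boot all_order all_algebra.
From Stdlib Require Import Classical Lia.
From mathcomp Require Import zify.
Import Order.TTheory GRing.Theory Num.Theory.
Set Implicit Arguments. Unset Strict Implicit. Unset Printing Implicit Defensive.

Section Gen.
Variables (V Ed : finType) (inc : V -> Ed -> bool).
Variables (R : realFieldType) (c : R).
Hypothesis c_gt0 : (0 < c)%R.
Variable Gam : {set Ed}.

Definition xs (A : {set Ed}) (F : Ed -> bool) := \big[addb/false]_(e in A) F e.

Lemma xsE (A : {set Ed}) F : xs A F = \big[addb/false]_e ((e \in A) && F e).
Proof. by rewrite /xs big_mkcond /=; apply: eq_bigr => e _; case: (e \in A). Qed.

Lemma odd_card (A : {set Ed}) (P : pred Ed) : odd #|[set e in A | P e]| = xs A P.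
Proof.
rewrite -sum1_card (big_morph odd oddD (erefl (odd 0))) xsE big_mkcond /=.
apply: eq_bigr => e _; rewrite !inE; by case: (e \in A); case: (P e).
Qed.

Lemma in_sd (T : finType) (A B : {set T}) x : (x \in symdiff A B) = (x \in A) (+) (x \in B).
Proof. by rewrite /symdiff !inE; case: (x \in A); case: (x \in B). Qed.

Lemma xs_sd (A B : {set Ed}) F : xs (symdiff A B) F = xs A F (+) xs B F.
Proof.
rewrite !xsE -big_split /=; apply: eq_bigr => e _; rewrite in_sd.
by case: (e \in A); case: (e \in B); case: (F e).
Qed.

Lemma xs_addb (A : {set Ed}) F G : xs A (fun e => F e (+) G e) = xs A F (+) xs A G.
Proof. by rewrite /xs big_split. Qed.

Lemma xs_eqe (A : {set Ed}) e : xs A (fun e' => e' == e) = (e \in A).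
Proof.
rewrite xsE (bigD1 e) //= eqxx andbT big1 ?addbF // => x /negbTE ->; by rewrite andbF.
Qed.

Lemma xs_false (A : {set Ed}) F : (forall e, e \in A -> F e = false) -> xs A F = false.
Proof. by move=> h; rewrite /xs big1. Qed.

Lemma xs1 e F : xs [set e] F = F e.
Proof. by rewrite /xs big_set1. Qed.

Lemma xs0 F : xs set0 F = false.
Proof. by rewrite /xs big_set0. Qed.

Lemma xs_ext (A : {set Ed}) F G : (forall e, e \in A -> F e = G e) -> xs A F = xs A G.
Proof. by move=> h; rewrite /xs; apply: eq_bigr. Qed.

Lemma bdryE (E : {set Ed}) v : (v \in bdry inc E) = xs E (inc v).
Proof. by rewrite inE odd_card. Qed.

Lemma parityE (E : {set Ed}) : parity Gam E = xs E (fun e => e \in Gam).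
Proof.
rewrite /parity -odd_card; congr (odd #|_|); apply/setP => e; by rewrite !inE.
Qed.

Lemma bdry_sd (A B : {set Ed}) : bdry inc (symdiff A B) = symdiff (bdry inc A) (bdry inc B).
Proof. by apply/setP => v; rewrite in_sd !bdryE xs_sd. Qed.

Lemma parity_sd (A B : {set Ed}) : parity Gam (symdiff A B) = parity Gam A (+) parity Gam B.
Proof. by rewrite !parityE xs_sd. Qed.

Lemma bdry0 : bdry inc set0 = set0.
Proof. by apply/setP => v; rewrite bdryE xs0 inE. Qed.

Lemma parity0 : parity Gam set0 = false.
Proof. by rewrite parityE xs0. Qed.

Lemma sd0 (T : finType) (A : {set T}) : symdiff set0 A = A.
Proof. by apply/setP => x; rewrite in_sd inE. Qed.

Lemma sdKl (T : finType) (A B : {set T}) : symdiff A (symdiff A B) = B.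
Proof. by apply/setP => x; rewrite !in_sd; case: (x \in A); case: (x \in B). Qed.

Lemma sdKr (T : finType) (A B : {set T}) : symdiff (symdiff A B) B = A.
Proof. by apply/setP => x; rewrite !in_sd; case: (x \in A); case: (x \in B). Qed.

Lemma sdC (T : finType) (A B : {set T}) : symdiff A B = symdiff B A.
Proof. by apply/setP => x; rewrite !in_sd addbC. Qed.

Lemma sdA (T : finType) (A B C : {set T}) : symdiff A (symdiff B C) = symdiff (symdiff A B) C.
Proof. by apply/setP => x; rewrite !in_sd addbA. Qed.

Lemma weightE (E : {set Ed}) : weight (fun _ => c) E = (c * (#|E|)%:R)%R.
Proof. by rewrite /weight sumr_const mulr_natr. Qed.

Lemma weight_le (A B : {set Ed}) : (weight (fun _ => c) A <= weight (fun _ => c) B)%R = (#|A| <= #|B|).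
Proof. by rewrite !weightE ler_pM2l // ler_nat. Qed.

Definition unc (E : {set Ed}) := uncorrectable inc (fun _ => c) set0 Gam E.

Definition wit (E Rc : {set Ed}) :=
  [/\ bdry inc Rc = bdry inc E, parity Gam Rc != parity Gam E &
      forall Q, bdry inc Q = bdry inc E -> #|Rc| <= #|Q|].

Lemma wit_unc (E Rc : {set Ed}) : wit E Rc -> unc E.
Proof.
case=> hb hp hm hc; move: hp; rewrite (hc Rc) ?eqxx //; split; first by rewrite hb.
by move=> Q; rewrite !setD0 weight_le => /esym h; apply: hm; rewrite h.
Qed.

Lemma unc_wit (E : {set Ed}) : unc E -> exists Rc, wit E Rc.
Proof.
move=> hu; apply: NNPP => hn; apply: hu => Rc [h1 h2]; apply/eqP/negPn/negP => hne.
apply: hn; exists Rc; split => //; first by move: h1; rewrite !setD0.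
move=> Q hQ; rewrite -weight_le; apply: h2; by rewrite !setD0 hQ.
Qed.

Definition reach (A B : {set Ed}) := exists Es : seq {set Ed},
  [/\ last A Es = B, path (fun X Y => #|symdiff X Y| == 1%N) A Es
    & forall X, X \in A :: Es -> unc X].

Lemma reach_refl (A : {set Ed}) : unc A -> reach A A.
Proof. by move=> h; exists [::]; split => // X; rewrite inE => /eqP ->. Qed.

Lemma reach_step (A B : {set Ed}) : unc A -> unc B -> #|symdiff A B| = 1%N -> reach A B.
Proof.
move=> hA hB h; exists [:: B]; split => //=; first by rewrite h.
by move=> X; rewrite !inE => /orP [] /eqP ->.
Qed.

Lemma reach_trans (A B C : {set Ed}) : reach A B -> reach B C -> reach A C.
Proof.
case=> s1 [h1 p1 u1] [s2 [h2 p2 u2]]; exists (s1 ++ s2); split.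
- by rewrite last_cat h1.
- by rewrite cat_path p1 h1 p2.
- move=> X; rewrite -cat_cons mem_cat => /orP [] h; first by apply: u1.
  by apply: u2; rewrite inE h orbT.
Qed.

Lemma reach_sym (A B : {set Ed}) : reach A B -> reach B A.
Proof.
case=> s [h1 p1 u1]; exists (rev (belast A s)); split.
- case: s h1 {p1 u1} => [|y s'] /=; first by move=> ->.
  by rewrite rev_cons last_rcons.
- rewrite -h1 rev_path; apply: sub_path p1 => X Y; by rewrite sdC.
- move=> X hX; apply: u1; rewrite lastI h1 -mem_rev rev_rcons; exact: hX.
Qed.

Definition ocyc (Z : {set Ed}) := bdry inc Z = set0 /\ parity Gam Z = true.

Lemma ocyc_unc (Z : {set Ed}) : ocyc Z -> unc Z.
Proof.
case=> h1 h2; apply: (@wit_unc _ set0); split; by rewrite ?bdry0 ?parity0 ?h1 ?h2 ?cards0.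
Qed.

Lemma witW2 (Y A : {set Ed}) : ocyc Y -> (forall Q, bdry inc Q = bdry inc A -> #|A| <= #|Q|) ->
  wit (symdiff Y A) A.
Proof.
case=> h1 h2 hm; split; rewrite ?bdry_sd ?parity_sd ?h1 ?h2 ?sd0 //.
by case: (parity Gam A).
Qed.

Lemma min1 (e : Ed) : bdry inc [set e] != set0 ->
  forall Q, bdry inc Q = bdry inc [set e] -> #|[set e]| <= #|Q|.
Proof.
move=> hn Q hQ; rewrite cards1 lt0n; apply/negP => /eqP /cards0_eq h0.
by move: hQ hn; rewrite h0 bdry0 => <-; rewrite eqxx.
Qed.

Lemma descent n : forall E Rc : {set Ed}, #|Rc| = n -> wit E Rc ->
  exists Z, reach E Z /\ ocyc Z.
Proof.
elim: n => [|n IH] E Rc hc hw.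
  move: (cards0_eq hc) hw => -> [h1 h2 h3]; exists E; split.
    by apply: reach_refl; apply: (@wit_unc _ set0); split.
  split; first by rewrite -h1 bdry0.
  by move: h2; rewrite parity0; case: (parity Gam E).
have : 0 < #|Rc| by rewrite hc.
case/card_gt0P => e he.
have hR : Rc :\ e = symdiff Rc [set e].
  apply/setP => x; rewrite in_sd !inE; case: (x =P e) => [->|]; by rewrite ?he ?andbT ?addbF ?eqxx.
case: hw => h1 h2 h3.
have hw' : wit (symdiff E [set e]) (Rc :\ e).
  split.
  - by rewrite hR !bdry_sd h1.
  - by rewrite hR !parity_sd; move: h2; case: (parity Gam Rc); case: (parity Gam E);
      case: (parity Gam [set e]).
  - move=> Q hQ; have := h3 (symdiff Q [set e]).
    rewrite bdry_sd hQ bdry_sd sdKr => /(_ erefl) hle.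
    have hc' : #|Rc| = (#|Rc :\ e|).+1 by rewrite (cardsD1 e Rc) he.
    have hle2 : #|symdiff Q [set e]| <= #|Q|.+1.
      apply: (@leq_trans #|e |: Q|); last by rewrite cardsU1; case: (e \notin Q).
      apply: subset_leq_card; apply/subsetP => x; rewrite in_sd !inE.
      by case: (x == e); case: (x \in Q).
    by move: (leq_trans hle hle2); rewrite hc' ltnS.
have hn : #|Rc :\ e| = n by move: hc; rewrite (cardsD1 e Rc) he add1n => -[].
have [Z [hr hz]] := IH _ _ hn hw'.
exists Z; split => //; apply: reach_trans hr; apply: reach_step.
- by apply: (@wit_unc _ Rc).
- by apply: (@wit_unc _ (Rc :\ e)).
- by rewrite sdKl cards1.
Qed.

Lemma move (Z : {set Ed}) (e1 e2 e3 e4 : Ed) :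
  ocyc Z ->
  let X := symdiff [set e1] (symdiff [set e2] (symdiff [set e3] [set e4])) in
  bdry inc X = set0 -> parity Gam X = false ->
  bdry inc [set e1] != set0 -> bdry inc [set e4] != set0 ->
  (forall Q, bdry inc Q = bdry inc (symdiff [set e1] [set e2]) ->
      #|symdiff [set e1] [set e2]| <= #|Q|) ->
  reach Z (symdiff Z X) /\ ocyc (symdiff Z X).
Proof.
move=> hZ X hXb hXp h1 h4 h12.
have hZX : ocyc (symdiff Z X).
  case: hZ => a1 a2; split; first by rewrite bdry_sd a1 hXb sd0.
  by rewrite parity_sd a2 hXp.
split => //.
have u0 := ocyc_unc hZ.
have u1 := wit_unc (witW2 hZ (min1 h1)).
have u2 := wit_unc (witW2 hZ h12).
have u3 := wit_unc (witW2 hZX (min1 h4)).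
have u4 := ocyc_unc hZX.
have cb : forall (Y1 Y2 : {set Ed}) e, (forall x, x \in Y1 = (x \in Y2) (+) (x \in [set e])) ->
   #|symdiff Y2 Y1| = 1%N.
  move=> Y1 Y2 e h; rewrite -(cards1 e); apply: eq_card => x.
  by rewrite in_sd h; case: (x \in Y2); case: (x \in [set e]).
apply: (reach_trans (reach_step u0 u1 _)).
  by apply: (cb _ _ e1) => x; rewrite in_sd.
apply: (reach_trans (reach_step u1 u2 _)).
  by apply: (cb _ _ e2) => x; rewrite !in_sd addbA.
apply: (reach_trans (reach_step u2 u3 _)).
  apply: (cb _ _ e3) => x; rewrite /X !in_sd.
  by case: (x \in Z); case: (x \in [set e1]); case: (x \in [set e2]); case: (x \in [set e3]); case: (x \in [set e4]).
apply: reach_step => //; apply: (cb _ _ e4) => x; rewrite /X !in_sd.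
by case: (x \in Z); case: (x \in [set e1]); case: (x \in [set e2]); case: (x \in [set e3]); case: (x \in [set e4]).
Qed.

End Gen.
Section Grid.
Variables W H a b s : nat.
Hypotheses (s_gt0 : 0 < s) (a_gt0 : 0 < a) (aW : a + s < W) (b_gt0 : 0 < b) (bH : b + s < H).

Local Notation Edg := (Edge W H a b s).
Local Notation Vt := (Vtx W H).
Local Notation incg := (@inc W H a b s).

Definition px (e : Edg) : nat := (val e).1.1.
Definition py (e : Edg) : nat := (val e).1.2.
Definition dd (e : Edg) : bool := (val e).2.

Lemma px_le e : px e <= W. Proof. by rewrite /px -ltnS ltn_ord. Qed.
Lemma py_le e : py e <= H. Proof. by rewrite /py -ltnS ltn_ord. Qed.

Lemma okE e : if dd e then (py e < H) && ~~ in_block_v a b s (px e) (py e) && ~~ in_block_v a b s (px e) (py e).+1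
  else (px e < W) && ~~ in_block_v a b s (px e) (py e) && ~~ in_block_v a b s (px e).+1 (py e).
Proof. exact: (valP e). Qed.

Lemma edge_eqE (e1 e2 : Edg) : (e1 == e2) = [&& px e1 == px e2, py e1 == py e2 & dd e1 == dd e2].
Proof.
rewrite -val_eqE /px /py /dd; case: (val e1) => [[x1 y1] d1]; case: (val e2) => [[x2 y2] d2] /=.
by rewrite !xpair_eqE andbA.
Qed.

Lemma incE (v : Vt) e : incg v e =
  ((v.1 : nat) == px e) && ((v.2 : nat) == py e) || ((v.1 : nat) == px e + ~~ dd e) && ((v.2 : nat) == py e + dd e).
Proof. by rewrite /inc /px /py /dd; case: v => i j; case: (val e) => [[x y] d] /=; rewrite xpair_eqE. Qed.

Lemma andb_big (I : finType) (bb : bool) (F : I -> bool) :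
  bb && \big[addb/false]_(i : I) F i = \big[addb/false]_(i : I) (bb && F i).
Proof. by case: bb => //=; rewrite big1. Qed.

Lemma pick_v (F : nat -> nat -> bool) i j : i <= W -> j <= H ->
  \big[addb/false]_(v : Vt) (F v.1 v.2 && (((v.1 : nat) == i) && ((v.2 : nat) == j))) = F i j.
Proof.
move=> hi hj; rewrite (bigD1 ((inord i, inord j) : Vt)) //= !inordK ?ltnS // !eqxx !andbT.
rewrite big1 ?addbF // => -[x y] /=; rewrite xpair_eqE => hne.
apply/negbTE; apply: contra hne => /andP [_ /andP [/eqP hx /eqP hy]].
by apply/andP; split; apply/eqP/val_inj; rewrite /= inordK ?ltnS // -?hx -?hy.
Qed.

Lemma q_le e : (px e + ~~ dd e <= W) && (py e + dd e <= H).
Proof.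
have := okE e; case: (dd e) => /=; rewrite ?addn0 ?addn1 ?px_le ?py_le //=.
  by case/andP => /andP [-> _] _.
by case/andP => /andP [-> _] _.
Qed.

Lemma cut_lemma (C : {set Edg}) (S : nat -> nat -> bool) : bdry incg C = set0 ->
  xs C (fun e => S (px e) (py e) (+) S (px e + ~~ dd e) (py e + dd e)) = false.
Proof.
move=> hC.
have h0 : \big[addb/false]_(v : Vt) (S v.1 v.2 && xs C (incg v)) = false.
  rewrite big1 // => v _; move: (bdryE incg C v); rewrite hC inE => <-; by rewrite andbF.
rewrite -h0 xsE; under [RHS]eq_bigr => v _ do rewrite xsE andb_big.
rewrite exchange_big /=; apply: eq_bigr => e _.
under eq_bigr => v _ do rewrite andbCA.
rewrite -andb_big; congr (_ && _).
have hx : forall v : Vt, incg v e = ((v.1 : nat) == px e) && ((v.2 : nat) == py e) (+)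
   ((v.1 : nat) == px e + ~~ dd e) && ((v.2 : nat) == py e + dd e).
  move=> v; rewrite incE; case: (dd e) => /=; rewrite ?addn0 ?addn1;
  case: ((v.1 : nat) =P px e) => h1; case: ((v.2 : nat) =P py e) => h2;
  case: ((v.1 : nat) =P (px e).+1) => h3; case: ((v.2 : nat) =P (py e).+1) => h4 //=; lia.
under eq_bigr => v _ do rewrite hx andb_addr.
rewrite big_split /= pick_v ?px_le ?py_le //.
by case/andP: (q_le e) => h1 h2; rewrite pick_v.
Qed.


Definition vcnt (C : {set Edg}) x y := xs C (fun e => dd e && (px e <= x) && (py e == y)).
Definition hm (C : {set Edg}) x y := xs C (fun e => ~~ dd e && (px e == x) && (py e == y)).
Definition vcnt' (C : {set Edg}) x y := xs C (fun e => dd e && (px e <= x) && ((py e).+1 == y)).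

Lemma R1 C x y : bdry incg C = set0 -> hm C x y (+) vcnt C x y (+) vcnt' C x y = false.
Proof.
move=> hC; rewrite -(cut_lemma (fun i j => (j == y) && (i <= x)) hC) /hm /vcnt /vcnt' -!xs_addb.
apply: xs_ext => e _ /=; case: (dd e) => /=; rewrite ?addn0 ?addn1; lia.
Qed.

Lemma vcnt'0 C x : vcnt' C x 0 = false.
Proof. by rewrite /vcnt'; apply: xs_false => e _; rewrite andbF. Qed.

Lemma vcnt'S C x y : vcnt' C x y.+1 = vcnt C x y.
Proof. by rewrite /vcnt' /vcnt; apply: xs_ext => e _; rewrite eqSS. Qed.

Lemma hmW C y : hm C W y = false.
Proof.
rewrite /hm ; apply: xs_false => e _.
move: (okE e); case: (dd e) => //=; rewrite /in_block_v; lia.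
Qed.

Lemma vW C y : bdry incg C = set0 -> vcnt C W y = false.
Proof.
move=> hC; elim: y => [|y IH].
  move: (R1 W 0 hC); rewrite hmW vcnt'0 /=; by case: (vcnt C W 0).
move: (R1 W y.+1 hC); rewrite hmW vcnt'S IH /=; by case: (vcnt C W y.+1).
Qed.

Lemma vH C x y : H <= y -> vcnt C x y = false.
Proof.
move=> hy; rewrite /vcnt ; apply: xs_false => e _.
move: (okE e); case: (dd e) => //=; rewrite /in_block_v; lia.
Qed.

Lemma vrow C x y : a <= x < a + s -> b <= y < b + s -> vcnt C x y = vcnt C a y.
Proof.
move=> hx hy; rewrite /vcnt; apply: xs_ext => e _.
move: (okE e); case: (dd e) => //=; rewrite /in_block_v; lia.
Qed.

Lemma vcol C y : bdry incg C = set0 -> b <= y < b + s -> vcnt C a y = vcnt C a b.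
Proof.
move=> hC; elim: y => [|y IH] hy; first by have -> : 0 = b by lia.
case: (ltnP b y.+1) => hb; last by have -> : y.+1 = b by lia.
rewrite -IH; last by lia.
have hm0 : hm C a y.+1 = false.
  rewrite /hm ; apply: xs_false => e _.
  move: (okE e); case: (dd e) => //=; rewrite /in_block_v; lia.
by move: (R1 a y.+1 hC); rewrite hm0 vcnt'S /=; case: (vcnt C a y.+1); case: (vcnt C a y).
Qed.


Definition gf (C : {set Edg}) (f : Face) : bool :=
  match f : (nat * nat) + bool with
  | inl xy => vcnt C xy.1 xy.2 | inr true => vcnt C a b | inr false => false end.

Lemma gpf C x y : bdry incg C = set0 -> x <= W -> y <= H -> gf C (pf W H a b s x y) = vcnt C x y.
Proof.
move=> hC hx hy; rewrite /pf; case: ifP => h1; [case: ifP => h2 //|] => /=.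
  case/andP: h2 => h2 h3; rewrite (vrow _ h2 h3) (vcol hC h3) //.
case: (ltnP x W) => hxW.
  by rewrite vH //; move: h1; rewrite hxW /=; lia.
have -> : x = W by lia.
by rewrite vW.
Qed.

Lemma edge_rel C e : bdry incg C = set0 ->
  (e \in C) = gf C (sides e).1 (+) gf C (sides e).2.
Proof.
move=> hC; rewrite /sides -/(px e) -/(py e) -/(dd e).
case hd: (dd e) => /=; rewrite gpf ?px_le ?py_le //.
- case: (px e =P 0) => hx /=.
    rewrite -xs_eqe /vcnt; apply: xs_ext => e' _; rewrite edge_eqE hd hx; lia.
  rewrite gpf ?py_le //; last by have := px_le e; lia.
  rewrite -xs_eqe /vcnt -xs_addb; apply: xs_ext => e' _; rewrite edge_eqE hd; lia.
- have hm' : hm C (px e) (py e) = (e \in C).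
    rewrite -xs_eqe /hm; apply: xs_ext => e' _; rewrite edge_eqE hd; lia.
  have := R1 (px e) (py e) hC; rewrite hm'.
  case: (py e =P 0) => hy /=.
    by rewrite hy vcnt'0; case: (e \in C); case: (vcnt C (px e) 0).
  rewrite gpf ?px_le //; last by have := py_le e; lia.
  have -> : py e = (py e).-1.+1 by lia.
  rewrite vcnt'S -pred_Sn.
  by case: (e \in C); case: (vcnt C (px e) (py e).-1); case: (vcnt C (px e) (py e).-1.+1).
Qed.


Lemma all2_sides f0 (fs : seq Face) (es : seq Edg) : size fs = size es ->
  all2 (@crosses W H a b s) es (zip (f0 :: fs) fs) ->
  forall e, e \in es -> ((sides e).1 \in f0 :: fs) && ((sides e).2 \in f0 :: fs).
Proof.
elim: es f0 fs => [|e0 es IH] f0 [|f1 fs] //= [hs] /andP [hc ha] e.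
rewrite inE => /orP [/eqP -> | he].
  by move: hc; rewrite /crosses => /orP [] /eqP ->; rewrite /= !inE !eqxx ?orbT.
by case/andP: (IH f1 fs hs ha e he); rewrite !inE => -> ->; rewrite !orbT.
Qed.

Lemma uniq_es f0 (fs : seq Face) (es : seq Edg) : size fs = size es ->
  uniq (f0 :: fs) -> all2 (@crosses W H a b s) es (zip (f0 :: fs) fs) -> uniq es.
Proof.
elim: es f0 fs => [|e0 es IH] f0 [|f1 fs] //= [hs] /andP [hf hu] /andP [hc ha].
rewrite (IH f1 fs hs hu ha) andbT; apply/negP => he.
case/andP: (all2_sides hs ha he); move: hc; rewrite /crosses => /orP [] /eqP -> h1 h2.
  by move: hf; rewrite h1.
by move: hf; rewrite h2.
Qed.

Lemma tele_list (g : Face -> bool) f0 (fs : seq Face) (es : seq Edg) : size fs = size es ->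
  all2 (@crosses W H a b s) es (zip (f0 :: fs) fs) ->
  \big[addb/false]_(e <- es) (g (sides e).1 (+) g (sides e).2) = g f0 (+) g (last f0 fs).
Proof.
elim: es f0 fs => [|e0 es IH] f0 [|f1 fs] //=; first by rewrite big_nil addbb.
move=> [hs] /andP [hc ha]; rewrite big_cons (IH f1 fs hs ha).
have -> : g (sides e0).1 (+) g (sides e0).2 = g f0 (+) g f1.
  by move: hc; rewrite /crosses => /orP [] /eqP -> //; rewrite addbC.
by rewrite addbA -(addbA (g f0)) addbb addbF.
Qed.

Lemma tele (g : Face -> bool) (X Gam : {set Edg}) : dual_cut Gam ->
  (forall e, (e \in X) = g (sides e).1 (+) g (sides e).2) ->
  parity Gam X = g Defect (+) g Outer.
Proof.
case=> fs [es [hs [hh hl] hu ha hG]] hX.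
case: fs hs hh hl hu ha => [//|f0 fs] /= [hs] -> hl hu ha.
rewrite -hl parityE xsE.
have -> : \big[addb/false]_e ((e \in X) && (e \in Gam)) = \big[addb/false]_(e in Gam) (e \in X).
  rewrite [RHS]big_mkcond /=; apply: eq_bigr => e _; by case: (e \in Gam); rewrite ?andbT ?andbF.
rewrite hG (eq_bigl (fun e => e \in es)) => [|e]; last by rewrite inE.
rewrite -big_uniq; last exact: uniq_es hs hu ha.
under eq_bigr => e _ do rewrite hX.
exact: tele_list.
Qed.


Lemma nSn (x : nat) : (x == x.+1) = false.
Proof. by elim: x. Qed.

Definition mkv (i j : nat) : Vt := (inord i, inord j).

Lemma mkv1 i j : i <= W -> ((mkv i j).1 : nat) = i.
Proof. by move=> h; rewrite /= inordK // ltnS. Qed.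
Lemma mkv2 i j : j <= H -> ((mkv i j).2 : nat) = j.
Proof. by move=> h; rewrite /= inordK // ltnS. Qed.

Lemma ok_of i j (d : bool) : i <= W -> j <= H ->
  (if d then (j < H) && ~~ in_block_v a b s i j && ~~ in_block_v a b s i j.+1
   else (i < W) && ~~ in_block_v a b s i j && ~~ in_block_v a b s i.+1 j) ->
  edge_ok a b s (mkv i j, d).
Proof. by move=> hi hj; rewrite /edge_ok /= !inordK ?ltnS. Qed.

Lemma pf_inl x y i j : x < W -> y < H -> ~~ ((a <= x < a + s) && (b <= y < b + s)) ->
  (pf W H a b s i j == inl (x, y)) = (i == x) && (j == y).
Proof.
move=> hx hy hn; rewrite /pf; case: ifP => h1; [case: ifP => h2|] => /=.
- by apply/esym/negbTE; apply: contraNN hn => /andP [/eqP <- /eqP <-].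
- case: eqP => [[-> ->]|hne]; first by rewrite !eqxx.
  by apply/esym/negP => /andP [/eqP ex /eqP ey]; apply: hne; rewrite ex ey.
- by apply/esym/negbTE; move: h1; apply: contraFN => /andP [/eqP -> /eqP ->]; lia.
Qed.

Definition PX x y : {set Edg} :=
  [set e | ((sides e).1 == inl (x, y)) (+) ((sides e).2 == inl (x, y))].

Lemma plaq x y : x < W -> y < H -> ~~ ((a <= x < a + s) && (b <= y < b + s)) ->
  exists e1 e2 e3 e4 : Edg,
   [/\ symdiff [set e1] (symdiff [set e2] (symdiff [set e3] [set e4])) = PX x y,
       bdry incg (PX x y) = set0, bdry incg [set e1] != set0, bdry incg [set e4] != set0 &
       forall Q, bdry incg Q = bdry incg (symdiff [set e1] [set e2]) ->
         #|symdiff [set e1] [set e2]| <= #|Q| ].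
Proof.
move=> hx hy hn.
have hx' : x <= W by lia. have hy' : y <= H by lia.
have hx1 : x.+1 <= W by lia. have hy1 : y.+1 <= H by lia.
have okB : edge_ok a b s (mkv x y, false) by apply: ok_of => //; rewrite /in_block_v; lia.
have okR : edge_ok a b s (mkv x.+1 y, true) by apply: ok_of => //; rewrite /in_block_v; lia.
have okT : edge_ok a b s (mkv x y.+1, false) by apply: ok_of => //; rewrite /in_block_v; lia.
have okL : edge_ok a b s (mkv x y, true) by apply: ok_of => //; rewrite /in_block_v; lia.
set eB : Edg := Sub _ okB; set eR : Edg := Sub _ okR.
set eT : Edg := Sub _ okT; set eL : Edg := Sub _ okL.
have vB : [/\ px eB = x, py eB = y & dd eB = false] by rewrite /px /py /dd /= !inordK ?ltnS.
have vR : [/\ px eR = x.+1, py eR = y & dd eR = true] by rewrite /px /py /dd /= !inordK ?ltnS.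
have vT : [/\ px eT = x, py eT = y.+1 & dd eT = false] by rewrite /px /py /dd /= !inordK ?ltnS.
have vL : [/\ px eL = x, py eL = y & dd eL = true] by rewrite /px /py /dd /= !inordK ?ltnS.
case: vB => B1 B2 B3; case: vR => R1' R2 R3; case: vT => T1 T2 T3; case: vL => L1 L2 L3.
have hX : symdiff [set eB] (symdiff [set eR] (symdiff [set eT] [set eL])) = PX x y.
  apply/setP => e; rewrite !in_sd !in_set1 !edge_eqE B1 B2 B3 R1' R2 R3 T1 T2 T3 L1 L2 L3 inE.
  rewrite /sides -/(px e) -/(py e) -/(dd e).
  case: (dd e) => /=; rewrite !andbF !andbT ?addFb ?addbF;
    case: ifP => h0 /=; rewrite ?(pf_inl _ _ hx hy hn) ?addFb; clear -h0; lia.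
have h1 : forall e : Edg, bdry incg [set e] != set0.
  move=> e; apply/set0Pn; exists (val e).1; by rewrite bdryE xs1 /inc eqxx.
exists eB, eR, eT, eL; split => //.
- apply/setP => v; rewrite -hX bdryE !xs_sd !xs1 !incE B1 B2 B3 R1' R2 R3 T1 T2 T3 L1 L2 L3 inE /= !addn0 !addn1.
  move: (v.1 : nat) (v.2 : nat) => i j.
  have cI : ~~((i == x) && (i == x.+1)) by apply/negP => /andP [/eqP -> ]; rewrite nSn.
  have cJ : ~~((j == y) && (j == y.+1)) by apply/negP => /andP [/eqP -> ]; rewrite nSn.
  by move: cI cJ; case: (i == x); case: (i == x.+1); case: (j == y); case: (j == y.+1).
- move=> Q hQ.
  have hne : eB != eR by rewrite edge_eqE B3 R3 /= !andbF.
  have -> : #|symdiff [set eB] [set eR]| = 2.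
    apply: (@etrans _ _ #|[set eB; eR]|); last by rewrite cards2 hne.
    apply: eq_card => e; rewrite in_sd !inE.
    by case: (e =P eB) => [->|]; rewrite ?(negbTE hne) //= orbF.
  have in0 : mkv x y \in bdry incg Q.
    by rewrite hQ bdryE xs_sd !xs1 !incE mkv1 ?mkv2 // B1 B2 B3 R1' R2 R3 /=; lia.
  have in1 : mkv x.+1 y.+1 \in bdry incg Q.
    by rewrite hQ bdryE xs_sd !xs1 !incE mkv1 ?mkv2 // B1 B2 B3 R1' R2 R3 /=; lia.
  case: (ltnP 1 #|Q|) => // hq.
  have : (#|Q| == 0) || (#|Q| == 1) by lia.
  case/orP => [/eqP /cards0_eq hQ0 | /cards1P [e he]].
    by move: in0; rewrite hQ0 bdry0 inE.
  move: in0 in1; rewrite he !bdryE !xs1 !incE !mkv1 ?mkv2 //; lia.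
Qed.

End Grid.

Section Main.
Variables W H a b s : nat.
Hypotheses (s_gt0 : 0 < s) (a_gt0 : 0 < a) (aW : a + s < W) (b_gt0 : 0 < b) (bH : b + s < H).
Variables (R : realFieldType) (c : R).
Hypothesis c_gt0 : (0 < c)%R.
Variable Gam : {set Edge W H a b s}.
Hypothesis hG : dual_cut Gam.
Local Notation Edg := (Edge W H a b s).
Local Notation incg := (@inc W H a b s).

Definition nb (x y : nat) := ~~ ((a <= x < a + s) && (b <= y < b + s)).

Definition fstep (A : {set Edg}) (p : nat * nat) := symdiff A (PX W H a b s p.1 p.2).

Lemma fold_reach l : (forall p, p \in l -> [&& p.1 < W, p.2 < H & nb p.1 p.2]) ->
  forall Z, ocyc incg Gam Z -> reach incg c Gam Z (foldl fstep Z l).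
Proof.
elim: l => [|p l IH] hl Z hZ /=.
  by apply: reach_refl; apply: ocyc_unc.
have /and3P [h1 h2 h3] := hl p (mem_head _ _).
have [e1 [e2 [e3 [e4 [hX hb h1' h4' hm]]]]] := plaq s_gt0 a_gt0 aW b_gt0 bH h1 h2 h3.
have hmv := @move _ _ incg _ c c_gt0 Gam Z e1 e2 e3 e4 hZ.
cbv zeta in hmv; rewrite hX in hmv.
have hp : parity Gam (PX W H a b s p.1 p.2) = false.
  by rewrite (@tele _ _ _ _ _ (fun f => f == inl (p.1, p.2)) _ _ hG) // => e; rewrite inE.
have [hr hz] := hmv hb hp h1' h4' hm.
apply: reach_trans hr _; apply: IH => // q hq; apply: hl; by rewrite inE hq orbT.
Qed.

Lemma fold_mem l Z e : (e \in foldl fstep Z l) =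
  (e \in Z) (+) \big[addb/false]_(p <- l) (e \in PX W H a b s p.1 p.2).
Proof.
elim: l Z => [|p l IH] Z /=; first by rewrite big_nil addbF.
by rewrite IH big_cons /fstep in_sd addbA.
Qed.

Lemma inl_eq (u v : nat * nat) : (inl u == inl v :> Face) = (u == v).
Proof. by apply/eqP/eqP => [[]|->]. Qed.

Lemma big_face (l : seq (nat * nat)) (f : Face) : uniq l ->
  \big[addb/false]_(p <- l) (f == inl (p.1, p.2)) =
  (match f : (nat * nat) + bool with inl q => q \in l | inr _ => false end).
Proof.
elim: l => [|p l IH] /=; first by rewrite big_nil; case: f.
case/andP => hp hu; rewrite big_cons IH //; clear IH; case: f => [q|bb] //=.
rewrite inl_eq inE -surjective_pairing; case: (q =P p) => [->|] //=; by rewrite (negbTE hp).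
Qed.

Lemma cyc Z1 Z2 : ocyc incg Gam Z1 -> ocyc incg Gam Z2 -> reach incg c Gam Z1 Z2.
Proof.
case=> b1 p1 [b2 p2].
set C := symdiff Z1 Z2.
have hC : bdry incg C = set0 by rewrite bdry_sd b1 b2 sd0.
have pC : parity Gam C = false by rewrite parity_sd p1 p2.
have hrel e := edge_rel s_gt0 a_gt0 aW b_gt0 bH e hC.
have hab : vcnt C a b = false by move: (tele hG hrel); rewrite pC /= addbF => <-.
set Pl := [seq xy <- [seq (x, y) | x <- iota 0 W, y <- iota 0 H] | nb xy.1 xy.2 && vcnt C xy.1 xy.2].
have memPl : forall i j, ((i, j) \in Pl) = [&& i < W, j < H, nb i j & vcnt C i j].
  move=> i j; rewrite mem_filter /=.
  have -> : ((i, j) \in [seq (x, y) | x <- iota 0 W, y <- iota 0 H]) = (i < W) && (j < H).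
    apply/allpairsP/andP => [[[x y] [hx hy [-> ->]]] | [hi hj]].
      by move: hx hy; rewrite /= !mem_iota !add0n => /andP [_ ->] /andP [_ ->].
    by exists (i, j); rewrite /= !mem_iota !add0n hi hj.
  by case: (nb i j); case: (vcnt C i j); case: (i < W); case: (j < H).
have uPl : uniq Pl.
  apply: filter_uniq; apply: allpairs_uniq; try exact: iota_uniq.
  by move=> [? ?] [? ?] _ _ /= [-> ->].
have hG' : forall i j, i <= W -> j <= H ->
    (match pf W H a b s i j : (nat * nat) + bool with inl q => q \in Pl | inr _ => false end)
    = gf C (pf W H a b s i j).
  move=> i j hi hj; rewrite /pf; case: ifP => h1; [case: ifP => h2|] => //=.
  rewrite ?hab //; apply: (etrans (memPl i j)); rewrite /nb h2; by case/andP: h1 => -> ->.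
have hside : forall e : Edg,
    (match (sides e).1 : (nat * nat) + bool with inl q => q \in Pl | inr _ => false end
       = gf C (sides e).1) /\
    (match (sides e).2 : (nat * nat) + bool with inl q => q \in Pl | inr _ => false end
       = gf C (sides e).2).
  case=> [[[i j] d] he]; rewrite /sides /=.
  have hi : (i : nat) <= W by rewrite -ltnS.
  have hj : (j : nat) <= H by rewrite -ltnS.
  have hi' : (i : nat).-1 <= W by rewrite (leq_trans (leq_pred _)).
  have hj' : (j : nat).-1 <= H by rewrite (leq_trans (leq_pred _)).
  by case: d he => he; case: ifP => _; rewrite ?hG'.
have -> : Z2 = foldl fstep Z1 Pl.
  apply/setP => e; rewrite fold_mem.
  have -> : \big[addb/false]_(p <- Pl) (e \in PX W H a b s p.1 p.2) = (e \in C).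
    under eq_bigr => p _ do rewrite inE.
    rewrite big_split /= !big_face // hrel.
    by case: (hside e) => -> ->.
  by rewrite in_sd addbA addbb.
apply: fold_reach => // -[i j]; rewrite memPl => /and4P [h1 h2 h3 _]; by rewrite /= h1 h2 h3.
Qed.

Lemma main_reach E E' : unc incg c Gam E -> unc incg c Gam E' -> reach incg c Gam E E'.
Proof.
move=> h1 h2.
have [R1 w1] := unc_wit c_gt0 h1; have [Z1 [r1 o1]] := descent c_gt0 erefl w1.
have [R2 w2] := unc_wit c_gt0 h2; have [Z2 [r2 o2]] := descent c_gt0 erefl w2.
exact: reach_trans r1 (reach_trans (cyc o1 o2) (reach_sym r2)).
Qed.

End Main.

Theorem lemma3 (W H a b s : nat) (R : realFieldType) (c : R)
    (Gam E E' : {set Edge W H a b s}) :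
  (0 < s)%N -> (0 < a)%N -> (a + s < W)%N -> (0 < b)%N -> (b + s < H)%N ->
  (0 < c)%R ->
  dual_cut Gam ->
  uncorrectable (@inc W H a b s) (fun _ => c) set0 Gam E ->
  uncorrectable (@inc W H a b s) (fun _ => c) set0 Gam E' ->
  exists Es : seq {set Edge W H a b s},
    [/\ last E Es = E',
        path (fun A B => #|symdiff A B| == 1%N) E Es
      & forall A, A \in E :: Es ->
          uncorrectable (@inc W H a b s) (fun _ => c) set0 Gam A].
Proof.
move=> hs ha haW hb hbH hc hG hE hE'.
by case: (main_reach hs ha haW hb hbH hc hG hE hE') => Es [h1 h2 h3]; exists Es; split.
Qed.
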